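(* On mixed graphs without directed cycles, the parameter $G\mapsto\mathrm{nd}(G)$ and the parameter $G\mapsto\mathrm{nd}(G^+)$ are incomparable (neither bounds the other), and likewise $G\mapsto\mathrm{cw}(G)$ and $G\mapsto\mathrm{cw}(G^+)$ are incomparable; here $\mathrm{nd}$ and $\mathrm{cw}$ denote neighborhood diversity and cliquewidth of the underlying undirected graph.
   Context: A mixed graph $G$ consists of a finite vertex set $V(G)$, a set $E(G)$ of undirected edges and a set $A(G)$ of directed arcs; it is simple and contains no directed cycle. The underlying undirected graph replaces every arc by an edge. The transitive closure $G^+$ is obtained by adding every arc $(u,v)$ such that $G$ has a directed path from $u$ to $v$, and removing any edge parallel to such an arc. For an undirected graph, $u,v$ have the same type if $N(u)\setminus\{v\}=N(v)\setminus\{u\}$ and neighborhood diversity is the number of types. A parameter $\alpha$ bounds $\beta$ if there is a computable $f$ with $\beta(G)\le f(\alpha(G))$ for all mixed graphs $G$ without directed cycles; two parameters are incomparable if neither bounds the other. *)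

(* Defs.v *)
From Stdlib Require Import ClassicalEpsilon.
From mathcomp Require Import all_boot.

Set Implicit Arguments.
Unset Strict Implicit.
Unset Printing Implicit Defensive.

Record mixed_graph := MixedGraph {
  mg_n : nat;
  mg_E : rel 'I_mg_n;
  mg_A : rel 'I_mg_n
}.
Arguments mg_E : clear implicits.
Arguments mg_A : clear implicits.

Definition mixed_ok (G : mixed_graph) : Prop :=
  [/\ (forall u, ~~ mg_E G u u),
      (forall u v, mg_E G u v = mg_E G v u),
      (forall u, ~~ mg_A G u u),
      (forall u v, mg_E G u v -> ~~ mg_A G u v /\ ~~ mg_A G v u)
    & (* no directed cycle: no arc u->v with a directed path back from v to u *)
      (forall u v, mg_A G u v -> ~~ connect (mg_A G) v u)].

(* directed path of length >= 1 from u to v *)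
Definition reach (G : mixed_graph) : rel 'I_(mg_n G) :=
  fun u v => [exists w, mg_A G u w && connect (mg_A G) w v].

Arguments reach : clear implicits.

Definition tclosure (G : mixed_graph) : mixed_graph :=
  @MixedGraph (mg_n G)
    (fun u v => [&& mg_E G u v, ~~ reach G u v & ~~ reach G v u])
    (reach G).

Definition underlying (G : mixed_graph) : rel 'I_(mg_n G) :=
  fun u v => [|| mg_E G u v, mg_A G u v | mg_A G v u].

Arguments underlying : clear implicits.

Definition same_type n (e : rel 'I_n) (u v : 'I_n) : bool :=
  [forall w, ((w != u) && (w != v)) ==> (e u w == e v w)].

Definition nd n (e : rel 'I_n) : nat :=
  #|[set [set v | same_type e u v] | u : 'I_n]|.

(* Cliquewidth via k-expressions.  Vertices of an expression are numbered
   0 .. cw_size t - 1 (leaves from left to right).                      *)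
Inductive cwterm :=
| CVert of nat
| CUnion of cwterm & cwterm
| CRelab of nat & nat & cwterm
| CJoin of nat & nat & cwterm.

Fixpoint cw_size (t : cwterm) : nat :=
  match t with
  | CVert _ => 1
  | CUnion a b => cw_size a + cw_size b
  | CRelab _ _ a => cw_size a
  | CJoin _ _ a => cw_size a
  end.

Fixpoint cw_label (t : cwterm) (u : nat) : nat :=
  match t with
  | CVert i => i
  | CUnion a b => if u < cw_size a then cw_label a u else cw_label b (u - cw_size a)
  | CRelab i j a => let l := cw_label a u in if l == i then j else l
  | CJoin _ _ a => cw_label a u
  end.

Fixpoint cw_edge (t : cwterm) (u v : nat) : bool :=
  match t with
  | CVert _ => false
  | CUnion a b =>
      let na := cw_size a in
      if (u < na) && (v < na) then cw_edge a u v
      else if (na <= u) && (na <= v) then cw_edge b (u - na) (v - na)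
      else false
  | CRelab _ _ a => cw_edge a u v
  | CJoin i j a =>
      cw_edge a u v ||
      ((u != v) &&
       (((cw_label a u == i) && (cw_label a v == j)) ||
        ((cw_label a u == j) && (cw_label a v == i))))
  end.

Fixpoint cw_ok (k : nat) (t : cwterm) : bool :=
  match t with
  | CVert i => i < k
  | CUnion a b => cw_ok k a && cw_ok k b
  | CRelab i j a => [&& i < k, j < k & cw_ok k a]
  | CJoin i j a => [&& i < k, j < k, i != j & cw_ok k a]
  end.

Definition cw_le n (e : rel 'I_n) (k : nat) : Prop :=
  n = 0 \/
  exists (t : cwterm) (f : 'I_n -> nat),
    [/\ cw_ok k t, cw_size t = n, injective f, (forall x, f x < n)
      & (forall x y, e x y = cw_edge t (f x) (f y))].

Definition decideb (P : Prop) : bool :=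
  if excluded_middle_informative P then true else false.

(* cliquewidth: least k with cw_le e k (cw_le e n always holds, so the
   search range 0..n suffices) *)
Definition cw n (e : rel 'I_n) : nat :=
  find (fun k => decideb (cw_le e k)) (iota 0 n.+1).

Definition nd_param (G : mixed_graph) : nat := nd (underlying G).
Definition nd_plus_param (G : mixed_graph) : nat := nd (underlying (tclosure G)).
Definition cw_param (G : mixed_graph) : nat := cw (underlying G).
Definition cw_plus_param (G : mixed_graph) : nat := cw (underlying (tclosure G)).

Definition bounds (alpha beta : mixed_graph -> nat) : Prop :=
  exists f : nat -> nat, forall G, mixed_ok G -> beta G <= f (alpha G).

Definition incomparable (alpha beta : mixed_graph -> nat) : Prop :=
  ~ bounds alpha beta /\ ~ bounds beta alpha.

(* Main.v *)
Require Import Defs.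
From mathcomp Require Import all_boot zify.
From Stdlib Require Import ClassicalEpsilon.
Set Implicit Arguments.
Unset Strict Implicit.
Unset Printing Implicit Defensive.


Inductive nf :=
| NLeaf of nat
| NNode of nf & nf & (nat -> nat -> bool) & (nat -> nat).

Fixpoint nsize (x : nf) : nat :=
  match x with NLeaf _ => 1 | NNode a b _ _ => nsize a + nsize b end.

Definition nbase (la lb : nat -> nat) (na : nat) (u : nat) :=
  if u < na then la u else lb (u - na).

Fixpoint nlab (x : nf) (u : nat) : nat :=
  match x with
  | NLeaf l => l
  | NNode a b R phi => phi (nbase (nlab a) (nlab b) (nsize a) u)
  end.

Fixpoint nedge (x : nf) (u v : nat) : bool :=
  match x with
  | NLeaf _ => false
  | NNode a b R phi =>
    let na := nsize a in
    (if (u < na) && (v < na) then nedge a u v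
     else if (na <= u) && (na <= v) then nedge b (u - na) (v - na) else false)
    || ((u != v) && R (nbase (nlab a) (nlab b) na u) (nbase (nlab a) (nlab b) na v))
  end.

Definition jrel (i j x y : nat) : bool := ((x == i) && (y == j)) || ((x == j) && (y == i)).

Definition nrelab (i j : nat) (x : nf) : nf :=
  match x with
  | NLeaf l => NLeaf (if l == i then j else l)
  | NNode a b R phi => NNode a b R (fun z => if phi z == i then j else phi z)
  end.

Definition njoin (i j : nat) (x : nf) : nf :=
  match x with
  | NLeaf l => NLeaf l
  | NNode a b R phi => NNode a b (fun z w => R z w || jrel i j (phi z) (phi w)) phi
  end.

Fixpoint nf_of (t : cwterm) : nf :=
  match t with
  | CVert i => NLeaf i
  | CUnion a b => NNode (nf_of a) (nf_of b) (fun _ _ => false) id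
  | CRelab i j a => nrelab i j (nf_of a)
  | CJoin i j a => njoin i j (nf_of a)
  end.

Lemma nsize_of t : nsize (nf_of t) = cw_size t.
Proof.
elim: t => //= [a IHa b IHb | i j a IH | i j a IH]; first by rewrite IHa IHb.
  by case: (nf_of a) IH.
by case: (nf_of a) IH.
Qed.

Lemma nlab_of t u : nlab (nf_of t) u = cw_label t u.
Proof.
elim: t u => //= [a IHa b IHb | i j a IH | i j a IH] u.
- by rewrite /nbase nsize_of IHa IHb.
- by rewrite -IH; case: (nf_of a).
- by rewrite -IH; case: (nf_of a).
Qed.

Lemma nleaf_lab t l u : nf_of t = NLeaf l -> cw_label t u = l.
Proof. by move=> E; rewrite -nlab_of E. Qed.

Lemma nedge_of k t u v : cw_ok k t -> nedge (nf_of t) u v = cw_edge t u v.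
Proof.
elim: t u v => //= [a IHa b IHb | i j a IH | i j a IH] u v.
- by case/andP=> oa ob; rewrite andbF orbF nsize_of (IHa _ _ oa) (IHb _ _ ob).
- by case/and3P=> _ _ oa; rewrite -IH //; case: (nf_of a).
- case/and4P=> _ _ ij oa; rewrite -IH // -!nlab_of.
  case E: (nf_of a) => [l|a' b' R phi] /=.
    case: (u != v); rewrite //=.
    case: (l =P i) => [li|] //=; case: (l =P j) => [lj|] //=.
    by move: ij; rewrite -li -lj eqxx.
  rewrite /jrel; case: (u != v); rewrite ?andbF ?orbF //=.
  by rewrite !orbA.
Qed.


Fixpoint valid k (x : nf) : bool :=
  match x with
  | NLeaf l => l < k
  | NNode a b R phi => [&& valid k a, valid k b & all (fun z => phi z < k) (iota 0 k)]
  end.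

Lemma nlab_lt k x u : valid k x -> nlab x u < k.
Proof.
elim: x u => //= a IHa b IHb R phi u /and3P[va vb /allP H]; apply: H.
rewrite mem_iota /= add0n /nbase; case: ifP => _; [exact: IHa | exact: IHb].
Qed.

Lemma valid_of k t : cw_ok k t -> valid k (nf_of t).
Proof.
elim: t => //= [a IHa b IHb | i j a IH | i j a IH].
- case/andP=> oa ob; rewrite IHa // IHb //=; apply/allP=> z.
  by rewrite mem_iota add0n.
- case/and3P=> ik jk oa; move: (IH oa); case: (nf_of a) => [l|a' b' R phi] /=.
    by case: ifP.
  case/and3P=> -> -> /allP H /=; apply/allP=> z zi.
  by case: ifP => _ //; apply: H.
- case/and4P=> ik jk _ oa; move: (IH oa); case: (nf_of a) => //.
Qed.

Definition ser_R k (R : nat -> nat -> bool) : seq nat :=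
  [seq nat_of_bool (R z w) | z <- iota 0 k, w <- iota 0 k].

Fixpoint ser k (x : nf) : seq nat :=
  match x with
  | NLeaf l => [:: 0; l]
  | NNode a b R phi => 1 :: ser_R k R ++ [seq phi z | z <- iota 0 k] ++ ser k a ++ ser k b
  end.

Lemma allpairs_eq_in (f g : nat -> nat -> nat) s t :
  [seq f z w | z <- s, w <- t] = [seq g z w | z <- s, w <- t] ->
  forall z w, z \in s -> w \in t -> f z w = g z w.
Proof.
elim: s => //= x s IH /eqP; rewrite eqseq_cat ?size_map // => /andP[/eqP E1 /eqP E2].
move=> z w; rewrite inE => /orP[/eqP -> | zs] wt; last exact: IH.
by move/eq_in_map: E1; apply.
Qed.

Lemma ser_R_eq k R R' : ser_R k R = ser_R k R' ->
  forall z w, z < k -> w < k -> R z w = R' z w.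
Proof.
move=> E z w zk wk.
have := allpairs_eq_in E (z:=z) (w:=w); rewrite !mem_iota /= !add0n => /(_ zk wk).
by case: (R z w); case: (R' z w).
Qed.

Lemma size_ser_R k R : size (ser_R k R) = k * k.
Proof. by rewrite /ser_R size_allpairs size_iota. Qed.

Lemma ser_inj k x y s s' : valid k x -> valid k y -> ser k x ++ s = ser k y ++ s' ->
  [/\ nsize x = nsize y, nlab x =1 nlab y, (forall u v, nedge x u v = nedge y u v) & s = s'].
Proof.
elim: x y s s' => [l|a IHa b IHb R phi] [l'|a' b' R' phi'] s s' //=.
- by move=> _ _ [-> ->].
- move=> /and3P[va vb /allP pa] /and3P[va' vb' /allP pa'] [].
  rewrite -!catA => /eqP; rewrite eqseq_cat ?size_ser_R // => /andP[/eqP ER /eqP].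
  move=> /eqP; rewrite eqseq_cat ?size_map // => /andP[/eqP Ephi /eqP E].
  case: (IHa a' _ _ va va' E) => Ea La Ga E2.
  case: (IHb b' _ _ vb vb' E2) => Eb Lb Gb ->.
  have Hphi : forall z, z < k -> phi z = phi' z.
    by move=> z zk; move/eq_in_map: Ephi; apply; rewrite mem_iota add0n.
  have Hb : forall u, nbase (nlab a) (nlab b) (nsize a) u = nbase (nlab a') (nlab b') (nsize a') u.
    by move=> u; rewrite /nbase Ea La Lb.
  have Hblt : forall u, nbase (nlab a) (nlab b) (nsize a) u < k.
    by move=> u; rewrite /nbase; case: ifP => _; apply: nlab_lt.
  split => //; first by rewrite Ea Eb.
  + by move=> u; rewrite Hphi ?Hb // -Hb.
  + move=> u v; rewrite (ser_R_eq ER (Hblt u) (Hblt v)) !Hb Ea; congr (_ || _).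
    by case: ifP => _; rewrite ?Ga //; case: ifP => _; rewrite ?Gb.
Qed.

Lemma ser_size k x : size (ser k x) + (k * k + k + 1) <= (k * k + k + 3) * nsize x.
Proof.
elim: x => [l|a IHa b IHb R phi] /=; first by rewrite muln1; lia.
rewrite size_cat size_ser_R size_cat size_map size_iota size_cat mulnDr.
move: IHa IHb; set d := k * k + k + 1; set c := k * k + k + 3 => IHa IHb.
have : size (ser k a) + size (ser k b) + 2 * d <= c * nsize a + c * nsize b.
  by rewrite mulSn mul1n addnACA; exact: leq_add.
apply: leq_trans; rewrite /d; lia.
Qed.

Lemma ser_lt k x : valid k x -> all (fun z => z < k.+2) (ser k x).
Proof.
elim: x => [l|a IHa b IHb R phi] /=; first by move=> lk; rewrite andbT (ltn_trans lk).
case/and3P=> va vb /allP pa; rewrite !all_cat IHa // IHb // !andbT.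
apply/andP; split.
  by apply/allP=> z /allpairsP[[x y] /= [_ _ ->]]; case: (R x y).
by apply/allP=> z /mapP[x xi ->]; apply: ltnW; apply: ltnW; exact: pa.
Qed.

Lemma nth_pad (s : seq nat) m i : nth 0 (s ++ nseq m 0) i = nth 0 s i.
Proof.
by rewrite nth_cat nth_nseq if_same; case: ltnP => // h; rewrite nth_default.
Qed.

Lemma pad_eq (s s' : seq nat) L : size s <= L -> size s' <= L ->
  (forall i, i < L -> nth 0 s i = nth 0 s' i) ->
  s ++ nseq (L - size s) 0 = s' ++ nseq (L - size s') 0.
Proof.
move=> hs hs' H; apply: (@eq_from_nth _ 0).
  by rewrite !size_cat !size_nseq !subnKC.
move=> i; rewrite size_cat size_nseq subnKC // => iL.
by rewrite !nth_pad H.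
Qed.

Lemma count_cw n k (F : finType) (g : F -> rel 'I_n.+1) :
  (forall x y, g x =2 g y -> x = y) -> (forall x, cw_le (g x) k) ->
  #|F| <= (k.+2) ^ ((k*k+k+3) * n.+1) * n.+1 ^ n.+1.
Proof.
move=> ginj gcw.
have H x : exists tf : cwterm * ('I_n.+1 -> nat),
  [/\ cw_ok k tf.1, cw_size tf.1 = n.+1, injective tf.2, forall v, tf.2 v < n.+1
    & forall a b, g x a b = cw_edge tf.1 (tf.2 a) (tf.2 b)].
  case: (gcw x) => // -[t [f [? ? ? ? ?]]]; by exists (t, f).
pose T x := proj1_sig (constructive_indefinite_description _ (H x)).
have TP x : [/\ cw_ok k (T x).1, cw_size (T x).1 = n.+1, injective (T x).2,
   forall v, (T x).2 v < n.+1 & forall a b, g x a b = cw_edge (T x).1 ((T x).2 a) ((T x).2 b)].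
  exact: (proj2_sig (constructive_indefinite_description _ (H x))).
set L := (k*k+k+3) * n.+1.
pose code x := ([ffun i : 'I_L => inord (nth 0 (ser k (nf_of (T x).1)) i) : 'I_k.+2],
                [ffun v => inord ((T x).2 v) : 'I_n.+1]).
have : injective code.
  move=> x y [E1 E2]; apply: ginj => a b.
  case: (TP x) => okx szx _ ltx ex; case: (TP y) => oky szy _ lty ey.
  have Ef v : (T x).2 v = (T y).2 v.
    move/ffunP: E2 => /(_ v); rewrite !ffunE => /(congr1 val) /=; rewrite !inordK //.
  set s := ser k (nf_of (T x).1); set s' := ser k (nf_of (T y).1).
  have ss : size s <= L.
    have := ser_size k (nf_of (T x).1); rewrite nsize_of szx -/s; apply: leq_trans.
    exact: leq_addr.
  have ss' : size s' <= L.
    have := ser_size k (nf_of (T y).1); rewrite nsize_of szy -/s'; apply: leq_trans.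
    exact: leq_addr.
  have Hlt (r : seq nat) i : all (fun z => z < k.+2) r -> nth 0 r i < k.+2.
    move/allP=> Hr; case: (ltnP i (size r)) => hi; first by apply: Hr; apply: mem_nth.
    by rewrite nth_default.
  have Es : forall i, i < L -> nth 0 s i = nth 0 s' i.
    move=> i iL; move/ffunP: E1 => /(_ (Ordinal iL)); rewrite !ffunE => /(congr1 val) /=.
    by rewrite !inordK //; apply: Hlt; apply: ser_lt; apply: valid_of.
  have := ser_inj (valid_of okx) (valid_of oky) (pad_eq ss ss' Es).
  case=> _ _ Ge _.
  by rewrite ex ey -!(nedge_of _ _ okx) -!(nedge_of _ _ oky) Ge !Ef.
move/leq_card; rewrite card_prod !card_ffun !card_ord //.
Qed.


Lemma decidebE P : decideb P = true <-> P.
Proof. by rewrite /decideb; case: excluded_middle_informative. Qed.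

Lemma cw_ok_mono k k' t : k <= k' -> cw_ok k t -> cw_ok k' t.
Proof.
move=> kk; elim: t => //= [i | a IHa b IHb | i j a IH | i j a IH].
- by move=> h; apply: leq_trans kk.
- by case/andP=> /IHa -> /IHb.
- by case/and3P=> ik jk /IH ->; rewrite (leq_trans ik kk) (leq_trans jk kk).
- by case/and4P=> ik jk -> /IH ->; rewrite (leq_trans ik kk) (leq_trans jk kk).
Qed.

Lemma cw_le_mono n (e : rel 'I_n) k k' : k <= k' -> cw_le e k -> cw_le e k'.
Proof.
move=> kk [h|[t [f [ok sz inj lt E]]]]; [by left | right].
by exists t, f; split => //; apply: cw_ok_mono ok.
Qed.

Lemma cw_le_of_cw n (e : rel 'I_n) K : cw e <= K -> K <= n -> cw_le e K.
Proof.
rewrite /cw => cK Kn.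
set P := (fun k => decideb (cw_le e k)).
case hP: (has P (iota 0 n.+1)).
  have hlt : find P (iota 0 n.+1) < n.+1 by rewrite -{2}(size_iota 0 n.+1) -has_find.
  have := nth_find 0 hP; rewrite nth_iota ?add0n //.
  by move/decidebE; apply: cw_le_mono.
move: hP; rewrite has_find ltnNge => /negbFE; rewrite size_iota => h.
by have := leq_trans h (leq_trans cK Kn); rewrite ltnn.
Qed.

Lemma cw_le_cw n (e : rel 'I_n) j : cw_le e j -> j <= n -> cw e <= j.
Proof.
move=> hj jn; rewrite /cw leqNgt; apply/negP => /(before_find 0).
rewrite nth_iota ?add0n // => /negP; apply; exact/decidebE.
Qed.

Lemma st_refl n (e : rel 'I_n) u : same_type e u u.
Proof. by apply/forallP=> w; apply/implyP. Qed.

Lemma st_sym n (e : rel 'I_n) u v : same_type e u v -> same_type e v u.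
Proof.
move/forallP=> H; apply/forallP=> w; apply/implyP=> /andP[wv wu].
by have := implyP (H w); rewrite wu wv eq_sym => /(_ isT).
Qed.

Lemma st_trans n (e : rel 'I_n) u v w : (forall x y, e x y = e y x) ->
  same_type e u v -> same_type e v w -> same_type e u w.
Proof.
move=> sym /forallP H1 /forallP H2; apply/forallP=> x; apply/implyP=> /andP[xu xw].
have H1' y : y != u -> y != v -> e u y = e v y by move=> a b; move: (H1 y); rewrite a b /= => /eqP.
have H2' y : y != v -> y != w -> e v y = e w y by move=> a b; move: (H2 y); rewrite a b /= => /eqP.
apply/eqP; case: (eqVneq x v) => [xv|xv]; last by rewrite H1' // H2'.
subst x; case: (eqVneq u w) => [uw|uw]; first by rewrite uw.
rewrite (sym u v) (H2' u) 1?eq_sym //; last by rewrite eq_sym.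
by rewrite (sym w u) (H1' w) 1?eq_sym // sym.
Qed.

Definition cls n (e : rel 'I_n) u := [set v | same_type e u v].

Lemma nd_le_map n (e : rel 'I_n) c (g : 'I_n -> 'I_c) : (forall x y, e x y = e y x) ->
  (forall u v, g u = g v -> same_type e u v) -> nd e <= c.
Proof.
move=> sym hg.
pose h (i : 'I_c) := [set v | [exists u, (g u == i) && same_type e u v]].
have E u : [set v | same_type e u v] = h (g u).
  apply/setP=> v; rewrite !inE /=.
  apply/idP/existsP => [H|[u' /andP[/eqP gu H]]]; first by exists u; rewrite eqxx.
  by apply: st_trans sym (st_sym (hg _ _ gu)) H.
apply: leq_trans (subset_leq_card (_ : _ \subset h @: [set: 'I_c])) _.
  by apply/subsetP=> X /imsetP[u _ ->]; rewrite (E u); apply: imset_f; exact: in_setT.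
by rewrite (leq_trans (leq_imset_card _ _)) // cardsT card_ord.
Qed.

Lemma nd_ge n (e : rel 'I_n) m (h : 'I_m -> 'I_n) :
  (forall i j, same_type e (h i) (h j) -> i = j) -> m <= nd e.
Proof.
move=> hh; rewrite /nd.
have inj : injective (fun i => [set v | same_type e (h i) v]).
  move=> i j E; apply: hh; have : h j \in [set v | same_type e (h j) v] by rewrite inE st_refl.
  by rewrite -E inE.
have := card_imset [set: 'I_m] inj; rewrite cardsT card_ord => <-.
apply: subset_leq_card; apply/subsetP=> X /imsetP[i _ ->]; exact: imset_f.
Qed.

Lemma connect_inv (T : finType) (e : rel T) (P : pred T) :
  (forall x y, P x -> e x y -> P y) -> forall x y, P x -> connect e x y -> P y.
Proof.
move=> H x y Px /connectP[p pth ->]; elim: p x Px pth => //= z p IH x Px /andP[exz pth].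
exact: IH (H _ _ Px exz) pth.
Qed.

Lemma pow4 d : 4 * (4 + d) <= 2 ^ (4 + d).
Proof.
elim: d => // d IH; rewrite addnS expnS.
have h : 4 <= 2 ^ (4 + d) by rewrite (leq_trans _ (leq_pexp2l (isT : 0 < 2) (leq_addr d 4))).
lia.
Qed.

Lemma numeric A : 0 < A -> exists p, [/\ A < p, 0 < p &
  forall N, 0 < N -> N <= 3 * p -> A ^ N * N ^ N < 2 ^ (p * p)].
Proof.
move=> A0; set a := 3 * A; set m := 3 * a + 4; exists (2 ^ m).
have hm : 4 * m <= 2 ^ m by have := pow4 (3 * a); rewrite addnC.
have ha : 3 * A <= 2 ^ a by apply: ltnW; apply: ltn_expl.
have p0 : 0 < 2 ^ m by rewrite expn_gt0.
have em : m = 3 * a + 4 by []. 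
split => //; first by rewrite /a in em; lia.
move=> N N0 Np; rewrite -expnMn.
apply: (@leq_ltn_trans ((A * (3 * 2 ^ m)) ^ (3 * 2 ^ m))).
  apply: leq_trans (_ : (A * (3 * 2 ^ m)) ^ N <= _).
    by rewrite leq_exp2r // leq_mul2l Np orbT.
  apply: leq_pexp2l => //; rewrite muln_gt0 A0 /= muln_gt0 p0 //.
apply: (@leq_ltn_trans ((2 ^ (a + m)) ^ (3 * 2 ^ m))).
  rewrite leq_exp2r ?muln_gt0 // expnD mulnA; apply: leq_mul => //.
  by rewrite mulnC.
rewrite -expnM ltn_exp2l // mulnA [_ * 3]mulnC ltn_pmul2r //.
move: hm em; clear; move: (2 ^ m) => P; lia.
Qed.


Definition reg p u := (p <= u) + (2 * p <= u).
Definition idx p u := u - reg p u * p.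

Lemma reg_le2 p u : reg p u <= 2.
Proof. by rewrite /reg; case: (p <= u); case: (2 * p <= u). Qed.

Definition AA p (B : nat -> nat -> bool) u v :=
  ((reg p u == 1) && (reg p v == 0) && B (idx p u) (idx p v))
  || ((reg p u == 0) && (reg p v == 2) && (idx p u == idx p v)).

Definition AE p (B : nat -> nat -> bool) u v :=
  [|| (reg p u == 1) && (reg p v == 0) && ~~ B (idx p u) (idx p v),
      (reg p u == 0) && (reg p v == 1) && ~~ B (idx p v) (idx p u),
      (reg p u == 0) && (reg p v == 2) && (idx p u != idx p v)
    | (reg p u == 2) && (reg p v == 0) && (idx p v != idx p u)].

Definition Bn q (Bf : {ffun 'I_q.+1 * 'I_q.+1 -> bool}) (i j : nat) : bool :=
  Bf (inord i, inord j).

Definition AG q (Bf : {ffun 'I_q.+1 * 'I_q.+1 -> bool}) : mixed_graph :=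
  @MixedGraph (3 * q + 2).+1 (fun u v => AE q.+1 (Bn Bf) u v) (fun u v => AA q.+1 (Bn Bf) u v).

Ltac regcase p u v :=
  have := reg_le2 p u; have := reg_le2 p v;
  case: (reg p u) => [|[|[|?]]]; case: (reg p v) => [|[|[|?]]] //= _ _.

Lemma AA_rk p B u v : AA p B u v ->
  (if reg p u == 1 then 0 else if reg p u == 0 then 1 else 2) <
  (if reg p v == 1 then 0 else if reg p v == 0 then 1 else 2).
Proof. rewrite /AA; regcase p u v; by rewrite ?andbF. Qed.

Lemma AG_ok q (Bf : {ffun 'I_q.+1 * 'I_q.+1 -> bool}) : mixed_ok (AG Bf).
Proof.
set p := q.+1; set B := Bn Bf.
have acyc : forall u v : 'I_(3 * q + 2).+1, AA p B u v -> ~~ connect (fun x y : 'I_(3 * q + 2).+1 => AA p B x y) v u.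
  move=> u v huv; apply/negP => /(connect_inv (P := fun x : 'I_(3 * q + 2).+1 =>
     (if reg p v == 1 then 0 else if reg p v == 0 then 1 else 2) <=
     (if reg p x == 1 then 0 else if reg p x == 0 then 1 else 2))).
  have := AA_rk huv => h1 h2.
  have : (if reg p v == 1 then 0 else if reg p v == 0 then 1 else 2) <=
     (if reg p u == 1 then 0 else if reg p u == 0 then 1 else 2).
    apply: h2 => //= x y hx /AA_rk h; exact: leq_trans hx (ltnW h).
  by rewrite leqNgt h1.
split.
- by move=> u /=; rewrite /AE; regcase p u u.
- by move=> u v /=; rewrite /AE; regcase p u v; rewrite ?orbF.
- by move=> u /=; rewrite /AA; regcase p u u; rewrite eqxx.
- by move=> u v /=; rewrite /AE /AA; regcase p u v; rewrite ?orbF ?andbF //=.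
- move=> u v; exact: acyc.
Qed.

Lemma reg0 p u : (reg p u == 0) = (u < p).
Proof. rewrite /reg; case: leqP => h1; case: leqP => h2 //=; lia. Qed.

Lemma reg_val p u k : k <= 2 -> k * p <= u < k.+1 * p -> reg p u = k /\ idx p u = u - k * p.
Proof.
move=> k2 /andP[h1 h2]; have rk : reg p u = k.
  rewrite /reg; move: k2 h1 h2; case: k => [|[|[|k]]] //= _; rewrite ?mul1n ?mul0n => h1 h2;
  case: leqP => h3; case: leqP => h4 //=; lia.
by rewrite /idx rk.
Qed.

Lemma AG_under q (Bf : {ffun 'I_q.+1 * 'I_q.+1 -> bool}) (u v : 'I_(3 * q + 2).+1) :
  underlying (AG Bf) u v = ((u < q.+1) != (v < q.+1)).
Proof.
rewrite /underlying /= /AE /AA -!reg0; regcase q.+1 u v; rewrite ?orbF ?andbF ?orbT //=.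
- by case: (Bn _ _ _).
- by rewrite orbC orbN.
- by rewrite orbC orbN.
- by rewrite orbC orbN.
Qed.

Lemma AG_reach_R q (Bf : {ffun 'I_q.+1 * 'I_q.+1 -> bool}) (u v : 'I_(3 * q + 2).+1) :
  reg q.+1 u = 2 -> reach (AG Bf) u v = false.
Proof.
move=> ru; apply/existsP => -[w /andP[]]; rewrite /= /AA ru //.
Qed.

Lemma AG_reach_LR q (Bf : {ffun 'I_q.+1 * 'I_q.+1 -> bool}) (u v : 'I_(3 * q + 2).+1) :
  reg q.+1 u = 1 -> reg q.+1 v = 2 ->
  reach (AG Bf) u v = Bn Bf (idx q.+1 u) (idx q.+1 v).
Proof.
move=> ru rv; apply/existsP/idP => [[w /andP[]]|H].
  rewrite /= /AA ru /= orbF => /andP[/eqP rw Buw] cw.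
  pose P := fun x : 'I_(3 * q + 2).+1 =>
     (x == w) || ((reg q.+1 x == 2) && (idx q.+1 x == idx q.+1 w)).
  have HP : forall x y : 'I_(3 * q + 2).+1, P x -> AA q.+1 (Bn Bf) x y -> P y.
    move=> x y /orP[/eqP ->|/andP[/eqP rx _]]; rewrite /AA ?rx ?rw //=.
    by move=> /andP[r2 /eqP e]; rewrite /P r2 e eqxx orbT.
  have := @connect_inv _ _ P HP w v; rewrite /P eqxx => /(_ isT cw) /orP[/eqP vw|/andP[_ /eqP ->]] //.
  by move: rv; rewrite vw rw.
have hv : idx q.+1 v < q.+1.
  move: rv; rewrite /idx /reg => rv; rewrite rv; move: rv.
  by case: leqP => h1; case: leqP => h2 //= _; have := ltn_ord v; lia.
have hw : idx q.+1 v < (3 * q + 2).+1 by lia.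
have [rw iw] : reg q.+1 (Ordinal hw) = 0 /\ idx q.+1 (Ordinal hw) = idx q.+1 v.
  by have := @reg_val q.+1 (Ordinal hw) 0 isT; rewrite mul0n subn0 /= mul1n hv; apply.
exists (Ordinal hw); rewrite /= /AA ru rw iw H /=; apply: connect1.
by rewrite rw rv iw eqxx /=; rewrite ?orbT.
Qed.

Lemma AG_plus_LR q (Bf : {ffun 'I_q.+1 * 'I_q.+1 -> bool}) (i j : 'I_q.+1) :
  underlying (tclosure (AG Bf)) (inord (q.+1 + i)) (inord (2 * q.+1 + j)) = Bf (i, j).
Proof.
have lu : q.+1 + i < (3 * q + 2).+1 by have := ltn_ord i; lia.
have lv : 2 * q.+1 + j < (3 * q + 2).+1 by have := ltn_ord j; lia.
have [ru iu] : reg q.+1 (inord (q.+1 + i) : 'I_(3 * q + 2).+1) = 1 /\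
               idx q.+1 (inord (q.+1 + i) : 'I_(3 * q + 2).+1) = i.
  rewrite inordK //; have := @reg_val q.+1 (q.+1 + i) 1 isT; rewrite mul1n.
  by case; [have := ltn_ord i; lia | move=> -> ->; rewrite addKn].
have [rv iv] : reg q.+1 (inord (2 * q.+1 + j) : 'I_(3 * q + 2).+1) = 2 /\
               idx q.+1 (inord (2 * q.+1 + j) : 'I_(3 * q + 2).+1) = j.
  rewrite inordK //; have := @reg_val q.+1 (2 * q.+1 + j) 2 isT.
  by case; [have := ltn_ord j; lia | move=> -> ->; rewrite addKn].
rewrite /underlying /= (AG_reach_R _ _ rv) (AG_reach_LR _ ru rv) /AE ru rv /= !orbF.
by rewrite /Bn iu iv !inord_val.
Qed.


Fixpoint indep (m : nat) (l : nat) : cwterm :=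
  match m with 0 => CVert l | S m' => CUnion (indep m' l) (CVert l) end.

Lemma indep_size m l : cw_size (indep m l) = m.+1.
Proof. by elim: m => //= m ->; rewrite addn1. Qed.

Lemma indep_label m l u : cw_label (indep m l) u = l.
Proof. by elim: m u => //= m IH u; case: ifP. Qed.

Lemma indep_edge m l u v : cw_edge (indep m l) u v = false.
Proof. by elim: m u v => //= m IH u v; rewrite IH; case: ifP => //; case: ifP. Qed.

Lemma indep_ok k m l : l < k -> cw_ok k (indep m l).
Proof. by move=> lk; elim: m => //= m ->. Qed.

Definition bip q r := CJoin 0 1 (CUnion (indep q 1) (indep r 0)).

Lemma bip_edge q r u v : cw_edge (bip q r) u v = ((u < q.+1) != (v < q.+1)).
Proof.
rewrite /= !indep_edge !indep_size !if_same /=.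
rewrite !indep_label.
case: (ltnP u q.+1) => hu; case: (ltnP v q.+1) => hv; rewrite /= ?andbF ?andbT //.
  by apply/eqP => E; move: hu hv; rewrite E; lia.
by apply/eqP => E; move: hu hv; rewrite E; lia.
Qed.

Lemma cw_le_bip q r n (e : rel 'I_n) : n = q.+1 + r.+1 ->
  (forall u v, e u v = ((u < q.+1) != (v < q.+1))) -> cw_le e 2.
Proof.
move=> En He; right; exists (bip q r), (fun x => nat_of_ord x); split => //.
- by rewrite /= !indep_ok.
- by rewrite /= !indep_size.
- exact: val_inj.
- by move=> u v; rewrite He bip_edge.
Qed.

Fixpoint clique (m : nat) : cwterm :=
  match m with 0 => CVert 0 | S m' => CRelab 1 0 (CJoin 0 1 (CUnion (clique m') (CVert 1))) end.

Lemma clique_size m : cw_size (clique m) = m.+1.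
Proof. by elim: m => //= m ->; rewrite addn1. Qed.

Lemma clique_label m u : cw_label (clique m) u = 0.
Proof. by elim: m u => //= m IH u; case: (u < cw_size (clique m)); rewrite ?IH. Qed.

Lemma clique_ok m : cw_ok 2 (clique m).
Proof. by elim: m => //= m ->. Qed.

Lemma clique_edge m u v : u < m.+1 -> v < m.+1 -> cw_edge (clique m) u v = (u != v).
Proof.
elim: m u v => [|m IH] u v /=.
  by rewrite !ltnS !leqn0 => /eqP -> /eqP ->.
rewrite clique_size !clique_label => hu hv.
case: (ltnP u m.+1) => h1; case: (ltnP v m.+1) => h2 /=.
- by rewrite IH // andbF orbF.
- by rewrite andbT.
- by rewrite andbT.
- have -> : v = m.+1 by lia.
  have -> : u = m.+1 by lia.
  by rewrite eqxx.
Qed.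

Lemma cw_le_clique m (e : rel 'I_m.+1) : (forall u v, e u v = (u != v)) -> cw_le e 2.
Proof.
move=> He; right; exists (clique m), (fun x => nat_of_ord x); split => //.
- exact: clique_ok.
- exact: clique_size.
- exact: val_inj.
- by move=> u v; rewrite He clique_edge.
Qed.


Definition PE q (Bf : {ffun 'I_q.+1 * 'I_q.+1 -> bool}) (u v : nat) : bool :=
  ((u < q.+1) && (q.+1 < v) && Bn Bf u (v - q.+2)) ||
  ((v < q.+1) && (q.+1 < u) && Bn Bf v (u - q.+2)).

Definition PG q (Bf : {ffun 'I_q.+1 * 'I_q.+1 -> bool}) : mixed_graph :=
  @MixedGraph (2 * q.+1).+1 (fun u v => PE Bf u v) (fun u v => v == u.+1 :> nat).

Lemma path_conn_le n (x y : 'I_n) : connect (fun u v : 'I_n => v == u.+1 :> nat) x y -> x <= y.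
Proof.
move=> c; have := @connect_inv _ _ (fun z : 'I_n => x <= z) _ x y (leqnn x) c; apply.
by move=> a b h /eqP ->; apply: leqW.
Qed.

Lemma path_conn_ge n (x y : 'I_n) : x <= y -> connect (fun u v : 'I_n => v == u.+1 :> nat) x y.
Proof.
move=> xy; have [d Ed] : exists d, (y : nat) = x + d by exists (y - x); lia.
elim: d y xy Ed => [|d IH] y xy Ed.
  have -> : y = x by apply: val_inj; rewrite /= Ed addn0.
  exact: connect0.
have hy : x + d < n by have := ltn_ord y; lia.
apply: connect_trans (IH (Ordinal hy) _ _) _ => //=; first exact: leq_addr.
by apply: connect1; rewrite /= Ed addnS.
Qed.

Lemma PG_reach q (Bf : {ffun 'I_q.+1 * 'I_q.+1 -> bool}) (u v : 'I_(2 * q.+1).+1) :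
  reach (PG Bf) u v = (u < v).
Proof.
apply/existsP/idP => [[w /andP[/eqP hw /path_conn_le]]|uv]; first by rewrite hw.
have hw : u.+1 < (2 * q.+1).+1 by have := ltn_ord v; lia.
by exists (Ordinal hw); rewrite /= eqxx; apply: path_conn_ge.
Qed.

Lemma PG_ok q (Bf : {ffun 'I_q.+1 * 'I_q.+1 -> bool}) : mixed_ok (PG Bf).
Proof.
split => /=.
- move=> u; rewrite /PE; apply/negP; case/orP => /andP[/andP[h1 h2] _]; lia.
- by move=> u v; rewrite /PE orbC.
- by move=> u; apply/eqP; lia.
- move=> u v; rewrite /PE => /orP[] /andP[/andP[h1 h2] _]; split; apply/negP => /eqP; lia.
- move=> u v /eqP huv; apply/negP => /path_conn_le; lia.
Qed.

Lemma PG_plus q (Bf : {ffun 'I_q.+1 * 'I_q.+1 -> bool}) (u v : 'I_(2 * q.+1).+1) :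
  underlying (tclosure (PG Bf)) u v = (u != v).
Proof.
rewrite /underlying /= !PG_reach.
case: (ltngtP u v) => h; rewrite ?andbF ?orbT //=.
- by apply/esym/eqP => /(congr1 val) /=; lia.
- by apply/esym/eqP => /(congr1 val) /=; lia.
- have -> : u = v by apply: val_inj.
  by rewrite eqxx orbF; have := PG_ok Bf; case => /(_ v) /negbTE /= ->.
Qed.

Lemma PG_under_LR q (Bf : {ffun 'I_q.+1 * 'I_q.+1 -> bool}) (i j : 'I_q.+1) :
  underlying (PG Bf) (inord i) (inord (q.+2 + j)) = Bf (i, j).
Proof.
have li : (i : nat) < (2 * q.+1).+1 by have := ltn_ord i; lia.
have lj : q.+2 + j < (2 * q.+1).+1 by have := ltn_ord j; lia.
rewrite /underlying /= /PE !inordK // ltn_ord /=.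
have -> : q.+1 < q.+2 + j by lia.
rewrite /= addKn /Bn !inord_val.
have -> : (q.+2 + j < q.+1) = false by apply/negbTE; rewrite -leqNgt; lia.
rewrite /= orbF.
have -> : (q.+2 + j == i.+1) = false by apply/negbTE/eqP; have := ltn_ord i; lia.
have -> : ((i : nat) == (q.+2 + j).+1) = false by apply/negbTE/eqP; have := ltn_ord i; lia.
by rewrite !orbF.
Qed.


Lemma fle (f : nat -> nat) x : x <= 2 -> f x <= f 0 + f 1 + f 2.
Proof. case: x => [|[|[|]]] //= _; lia. Qed.

Lemma AG_nd q (Bf : {ffun 'I_q.+1 * 'I_q.+1 -> bool}) : nd_param (AG Bf) <= 2.
Proof.
rewrite /nd_param.
apply: (@nd_le_map _ _ 2 (fun u => if (u : nat) < q.+1 then ord0 else ord_max)).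
  by move=> x y; rewrite !AG_under [in RHS]eq_sym.
move=> u v guv; apply/forallP => w; apply/implyP => _; rewrite !AG_under.
by move: guv; case: ifP; case: ifP => // -> ->.
Qed.

Lemma not_nd_nd_plus : ~ bounds nd_param nd_plus_param.
Proof.
case=> f Hf; set K := f 0 + f 1 + f 2.
pose Bf : {ffun 'I_K.+1 * 'I_K.+1 -> bool} := [ffun ij => ij.1 == ij.2].
have h1 := Hf (AG Bf) (AG_ok Bf).
have h2 : nd_plus_param (AG Bf) <= K by apply: leq_trans h1 (fle f (AG_nd Bf)).
have : K.+1 <= nd_plus_param (AG Bf).
  apply: (@nd_ge _ _ _ (fun i : 'I_K.+1 => inord (K.+1 + i))) => i j st.
  apply/eqP/negP => /negP ij.
  have lw : 2 * K.+1 + i < (3 * K + 2).+1 by have := ltn_ord i; lia.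
  have li : K.+1 + i < (3 * K + 2).+1 by have := ltn_ord i; lia.
  have lj : K.+1 + j < (3 * K + 2).+1 by have := ltn_ord j; lia.
  move/forallP: st => /(_ (inord (2 * K.+1 + i))) /implyP.
  have ji : (j == i) = false by rewrite eq_sym (negbTE ij).
  rewrite !AG_plus_LR /Bf !ffunE /= eqxx ji => H.
  suff : false by [].
  apply: H; apply/andP; split; apply/eqP => /(congr1 val);
    rewrite /= !inordK //; have := ltn_ord i; have := ltn_ord j; lia.
by rewrite leqNgt ltnS h2.
Qed.

Lemma PG_under0 q (u v : 'I_(2 * q.+1).+1) :
  underlying (PG ([ffun _ => false] : {ffun 'I_q.+1 * 'I_q.+1 -> bool})) u v =
  (v == u.+1 :> nat) || (u == v.+1 :> nat).
Proof. by rewrite /underlying /= /PE /Bn !ffunE !andbF. Qed.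

Lemma not_ndplus_nd : ~ bounds nd_plus_param nd_param.
Proof.
case=> f Hf; set K := f 0 + f 1; set q := 3 * K.+1.
pose Bf : {ffun 'I_q.+1 * 'I_q.+1 -> bool} := [ffun _ => false].
have h1 := Hf (PG Bf) (PG_ok Bf).
have h0 : nd_plus_param (PG Bf) <= 1.
  rewrite /nd_plus_param; apply: (@nd_le_map _ _ 1 (fun _ => ord0)).
    by move=> x y; rewrite !PG_plus eq_sym.
  move=> u v _; apply/forallP => w; apply/implyP => /andP[wu wv].
  by rewrite !PG_plus (eq_sym u) (eq_sym v) wu wv.
have h2 : nd_param (PG Bf) <= K.
  apply: leq_trans h1 _; move: h0; case: (nd_plus_param _) => [|[|]] //= _; lia.
have : K.+1 <= nd_param (PG Bf).
  have hh (i : 'I_K.+1) : 3 * i < (2 * q.+1).+1 by have := ltn_ord i; rewrite /q; lia.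
  apply: (@nd_ge _ _ _ (fun i : 'I_K.+1 => Ordinal (hh i))).
  suff H : forall i j : 'I_K.+1, i < j -> ~~ same_type (underlying (PG Bf)) (Ordinal (hh i)) (Ordinal (hh j)).
    move=> i j st; case: (ltngtP i j) => ij.
    - by move: (H _ _ ij); rewrite st.
    - by move: (H _ _ ij); rewrite (st_sym st).
    - exact: val_inj.
  move=> i j ij; apply/negP => /forallP.
  have hw : 3 * i + 1 < (2 * q.+1).+1 by have := ltn_ord i; have := ltn_ord j; rewrite /q; lia.
  move=> /(_ (Ordinal hw)) /implyP.
  rewrite /nd_param !PG_under0 /=.
  have p1 : (Ordinal hw != Ordinal (hh i)) && (Ordinal hw != Ordinal (hh j)).
    by apply/andP; split; apply/eqP => /(congr1 val) /=; lia.
  move=> /(_ p1) /eqP.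
  have e1 : (3 * i + 1 == (3 * j).+1) = false by apply/eqP; lia.
  have e2 : (3 * j == (3 * i + 1).+1) = false by apply/eqP; lia.
  by rewrite e1 e2 addn1 eqxx.
by rewrite leqNgt ltnS h2.
Qed.

Lemma card_B q : #|{: {ffun 'I_q.+1 * 'I_q.+1 -> bool}}| = 2 ^ (q.+1 * q.+1).
Proof. by rewrite card_ffun card_prod card_ord card_bool. Qed.

Lemma big_K K : exists q, [/\ K <= q & forall N, 0 < N -> N <= 3 * q.+1 ->
  2 ^ (q.+1 * q.+1) <= K.+2 ^ ((K * K + K + 3) * N) * N ^ N -> False].
Proof.
set c := K * K + K + 3.
have A0 : 0 < K.+2 ^ c by rewrite expn_gt0.
have [p [Ap p0 H]] := numeric A0.
have Kc : K < K.+2 ^ c by apply: leq_trans (ltn_expl c (isT : 1 < K.+2)); rewrite /c; lia.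
exists p.-1; split; first by lia.
move=> N N0 Np; rewrite prednK // in Np * => h.
have H' := H N N0 Np; rewrite -!expnM in h H'.
by have := leq_ltn_trans h H'; rewrite ltnn.
Qed.

Lemma not_cw_cw_plus : ~ bounds cw_param cw_plus_param.
Proof.
case=> f Hf; set K := f 0 + f 1 + f 2.
have [q [Kq Hq]] := big_K K.
apply: (Hq (3 * q + 3)); [lia | lia | ].
have -> : 3 * q + 3 = (3 * q + 2).+1 by lia.
rewrite -card_B.
apply: (@count_cw _ _ _ (fun Bf : {ffun 'I_q.+1 * 'I_q.+1 -> bool} =>
   underlying (tclosure (AG Bf)))).
  move=> x y E; apply/ffunP => -[i j].
  by have := E (inord (q.+1 + i)) (inord (2 * q.+1 + j)); rewrite !AG_plus_LR.
move=> Bf; apply: cw_le_of_cw; last by lia.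
apply: leq_trans (Hf _ (AG_ok Bf)) _; apply: fle.
rewrite /cw_param; apply: cw_le_cw; last by rewrite /=; lia.
by apply: (@cw_le_bip q (2 * q + 1)); [rewrite /=; lia | exact: AG_under].
Qed.


Lemma not_cwplus_cw : ~ bounds cw_plus_param cw_param.
Proof.
case=> f Hf; set K := f 0 + f 1 + f 2.
have [q [Kq Hq]] := big_K K.
apply: (Hq (2 * q + 3)); [lia | lia | ].
have -> : 2 * q + 3 = (2 * q.+1).+1 by lia.
rewrite -card_B.
apply: (@count_cw _ _ _ (fun Bf : {ffun 'I_q.+1 * 'I_q.+1 -> bool} =>
   underlying (PG Bf))).
  move=> x y E; apply/ffunP => -[i j].
  by have := E (inord i) (inord (q.+2 + j)); rewrite !PG_under_LR.
move=> Bf; apply: cw_le_of_cw; last by lia.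
apply: leq_trans (Hf _ (PG_ok Bf)) _; apply: fle.
rewrite /cw_plus_param; apply: cw_le_cw; last by rewrite /=; lia.
by apply: (@cw_le_clique (2 * q.+1)) => u v; rewrite PG_plus.
Qed.

Theorem mainTheorem19 :
  incomparable nd_param nd_plus_param /\ incomparable cw_param cw_plus_param.
Proof.
split; split.
- exact: not_nd_nd_plus.
- exact: not_ndplus_nd.
- exact: not_cw_cw_plus.
- exact: not_cwplus_cw.
Qed.
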